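(* Consider the wound rotor synchronous machine model with state $x=(i_{s\alpha},i_{s\beta},i_f,\omega,\theta)^T$, input $\mathcal{V}=(v_{s\alpha},v_{s\beta},v_f)^T$, current vector $\mathcal{I}=(i_{s\alpha},i_{s\beta},i_f)^T$: $$\frac{d\mathcal{I}}{dt}=-\mathfrak{L}(\theta)^{-1}\mathfrak{R}_{eq}\mathcal{I}+\mathfrak{L}(\theta)^{-1}\mathcal{V},\qquad \dot\omega=0,\qquad\dot\theta=\omega,$$ where $$\mathfrak{L}(\theta)=\begin{bmatrix}L_0+L_2\cos2\theta & L_2\sin2\theta & M_f\cos\theta\\ L_2\sin2\theta & L_0-L_2\cos2\theta & M_f\sin\theta\\ M_f\cos\theta & M_f\sin\theta & L_f\end{bmatrix},\quad \mathfrak{R}=\mathrm{diag}(R_s,R_s,R_f),\quad \mathfrak{R}_{eq}=\mathfrak{R}+\omega\frac{\partial\mathfrak{L}}{\partial\theta}.$$ Let $L_d=L_0+L_2$, $L_q=L_0-L_2$, $L_\Delta=L_d-L_q$, assume $L_d,L_q,L_f>0$ and $\sigma_d:=1-\frac{M_f^2}{L_dL_f}\neq 0$, and set $\sigma_\Delta L_\Delta:=L_\Delta-\frac{M_f^2}{L_f}$ (i.e. $\sigma_\Delta=1-\frac{M_f^2}{L_\Delta L_f}$ when $L_\Delta\ne0$). Let $\mathcal{O}(x)$ be the $5\times5$ matrix whose rows are the gradients with respect to $x$ of $i_{s\alpha},\ i_{s\beta},\ i_f,\ \mathcal{L}_f i_{s\alpha},\ \mathcal{L}_f i_{s\beta}$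 (first Lie derivatives along the model, i.e. the right-hand sides of the $i_{s\alpha}$, $i_{s\beta}$ equations). Define $i_{sd},i_{sq}$ by $\begin{bmatrix}i_{s\alpha}\\ i_{s\beta}\end{bmatrix}=\begin{bmatrix}\cos\theta&-\sin\theta\\ \sin\theta&\cos\theta\end{bmatrix}\begin{bmatrix}i_{sd}\\ i_{sq}\end{bmatrix}$. Then $$\det\mathcal{O}(x)=\frac{1}{\sigma_dL_dL_q}\Big[(L_\Delta i_{sd}+M_fi_f)^2+\sigma_\Delta L_\Delta^2 i_{sq}^2\Big]\omega+\frac{\sigma_\Delta L_\Delta}{\sigma_dL_dL_q}\Big[\Big(L_\Delta\frac{di_{sd}}{dt}+M_f\frac{di_f}{dt}\Big)i_{sq}-(L_\Delta i_{sd}+M_fi_f)\frac{di_{sq}}{dt}\Big],$$ where $\frac{di_{sd}}{dt},\frac{di_{sq}}{dt},\frac{di_f}{dt}$ denote the time derivatives along the model (functions of the state and input). Equivalently, with $\Psi_{\mathcal{O}d}=L_\Delta i_{sd}+M_fi_f$, $\Psi_{\mathcal{O}q}=\sigma_\Delta L_\Delta i_{sq}$ and, when $(\Psi_{\mathcal{O}d},\Psi_{\mathcal{O}q})\ne 0$, $\theta_{\mathcal{O}}$ its polar angle, $$\det\mathcal{O}(x)=\frac{1}{\sigma_dL_dL_q}\Big[(\Psi_{\mathcal{O}d}^2+\sigma_\Delta L_\Delta^2 i_{sq}^2)\,\omega-(\Psi_{\mathcal{O}d}^2+\Psi_{\mathcal{O}q}^2)\frac{d\theta_{\mathcal{O}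}}{dt}\Big].$$
   Context: The Lie derivative $\mathcal{L}_f h$ of an output component $h$ along $\dot x=f(x,u)$ is $\frac{\partial h}{\partial x}f(x,u)$. The observability rank condition at $x$ means this matrix is nonsingular at $x$, which implies local weak observability. *)

(* Defs.v *)
From Stdlib Require Import Reals Lra List.
Import ListNotations.
Open Scope R_scope.

(* Matrices / vectors as index functions (0-based); dimensions given separately. *)
Definition vec := nat -> R.
Definition mat := nat -> nat -> R.

Definition rsum (n : nat) (f : nat -> R) : R :=
  fold_right Rplus 0 (map f (seq 0 n)).

Definition skip (k a : nat) : nat := if Nat.ltb a k then a else S a.

Definition minor (M : mat) (i j : nat) : mat :=
  fun r c => M (skip i r) (skip j c).

Fixpoint det (n : nat) (M : mat) : R :=
  match n with
  | O => 1
  | S n' => rsum n (fun j => (-1) ^ j * M 0%nat j * det n' (minor M 0 j))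
  end.

Definition inv (n : nat) (M : mat) : mat :=
  fun i j => (-1) ^ (i + j) * det (pred n) (minor M j i) / det n M.

Definition mv (n : nat) (M : mat) (v : vec) : vec :=
  fun i => rsum n (fun k => M i k * v k).

Definition Lmat (L0 L2 Mf Lf th : R) : mat := fun i j =>
  match i, j return R with
  | 0, 0 => L0 + L2 * cos (2 * th)
  | 0, 1 => L2 * sin (2 * th)
  | 0, 2 => Mf * cos th
  | 1, 0 => L2 * sin (2 * th)
  | 1, 1 => L0 - L2 * cos (2 * th)
  | 1, 2 => Mf * sin th
  | 2, 0 => Mf * cos th
  | 2, 1 => Mf * sin th
  | 2, 2 => Lf
  | _, _ => 0
  end.

Definition dLmat (L0 L2 Mf Lf th : R) : mat := fun i j =>
  match i, j return R with
  | 0, 0 => - 2 * L2 * sin (2 * th)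
  | 0, 1 => 2 * L2 * cos (2 * th)
  | 0, 2 => - Mf * sin th
  | 1, 0 => 2 * L2 * cos (2 * th)
  | 1, 1 => 2 * L2 * sin (2 * th)
  | 1, 2 => Mf * cos th
  | 2, 0 => - Mf * sin th
  | 2, 1 => Mf * cos th
  | _, _ => 0
  end.

Definition Rmat (Rs Rf : R) : mat := fun i j =>
  match i, j return R with
  | 0, 0 => Rs | 1, 1 => Rs | 2, 2 => Rf | _, _ => 0
  end.

Definition Req (L0 L2 Mf Lf Rs Rf om th : R) : mat :=
  fun i j => Rmat Rs Rf i j + om * dLmat L0 L2 Mf Lf th i j.

(* State x = (isa, isb, if, omega, theta) at indices 0..4; input u = (vsa, vsb, vf) at 0..2.
   Vector field of the model: dI/dt = L^-1 (V - Req I), domega/dt = 0, dtheta/dt = omega. *)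
Definition field (L0 L2 Mf Lf Rs Rf : R) (x u : vec) : vec := fun k =>
  match k with
  | 0 | 1 | 2 =>
      mv 3 (inv 3 (Lmat L0 L2 Mf Lf (x 4%nat)))
        (fun m => u m - mv 3 (Req L0 L2 Mf Lf Rs Rf (x 3%nat) (x 4%nat)) x m) k
  | 3 => 0
  | 4 => x 3%nat
  | _ => 0
  end.

Definition obs (L0 L2 Mf Lf Rs Rf : R) (u : vec) (i : nat) : vec -> R :=
  match i with
  | 0 => fun x => x 0%nat
  | 1 => fun x => x 1%nat
  | 2 => fun x => x 2%nat
  | 3 => fun x => field L0 L2 Mf Lf Rs Rf x u 0%nat
  | _ => fun x => field L0 L2 Mf Lf Rs Rf x u 1%nat
  end.

Definition upd (x : vec) (j : nat) (t : R) : vec :=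
  fun k => if Nat.eqb k j then t else x k.

Definition partial_deriv (h : vec -> R) (x : vec) (j : nat) (d : R) : Prop :=
  derivable_pt_lim (fun t => h (upd x j t)) (x j) d.

(* d-q currents and their time derivatives along the model (chain rule). *)
Definition isd (x : vec) : R := cos (x 4%nat) * x 0%nat + sin (x 4%nat) * x 1%nat.
Definition isq (x : vec) : R := - sin (x 4%nat) * x 0%nat + cos (x 4%nat) * x 1%nat.

Definition disd (L0 L2 Mf Lf Rs Rf : R) (x u : vec) : R :=
  let F := field L0 L2 Mf Lf Rs Rf x u in
  let th := x 4%nat in
  - sin th * F 4%nat * x 0%nat + cos th * F 0%nat
  + cos th * F 4%nat * x 1%nat + sin th * F 1%nat.

Definition disq (L0 L2 Mf Lf Rs Rf : R) (x u : vec) : R :=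
  let F := field L0 L2 Mf Lf Rs Rf x u in
  let th := x 4%nat in
  - cos th * F 4%nat * x 0%nat - sin th * F 0%nat
  - sin th * F 4%nat * x 1%nat + cos th * F 1%nat.

(* Main.v *)
Require Import Defs.
From Stdlib Require Import Reals Nsatz FunctionalExtensionality Lia Lra.
From Coquelicot Require Import Coquelicot.
Open Scope R_scope.
Lemma detL L0 L2 Mf Lf th : det 3 (Lmat L0 L2 Mf Lf th) = (L0+L2)*(L0-L2)*Lf - Mf^2*(L0-L2).
Proof.
  unfold det, rsum, minor, skip, Lmat; simpl.
  rewrite cos_2a, sin_2a. pose proof (sin2_cos2 th). unfold Rsqr in H.
  nsatz.
Qed.
Definition Kc L0 L2 Mf Lf := (L0+L2)*(L0-L2)*Lf - Mf^2*(L0-L2).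
Definition Fx (k:nat) L0 L2 Mf Lf Rs Rf (u:vec) x0 x1 x2 om th :=
  / Kc L0 L2 Mf Lf * rsum 3 (fun m => (-1)^(k+m) * det 2 (minor (Lmat L0 L2 Mf Lf th) m k) *
     (u m - (Req L0 L2 Mf Lf Rs Rf om th m 0%nat * x0 + Req L0 L2 Mf Lf Rs Rf om th m 1%nat * x1
             + Req L0 L2 Mf Lf Rs Rf om th m 2%nat * x2))).
Lemma fieldE L0 L2 Mf Lf Rs Rf x u k : (k < 3)%nat ->
  field L0 L2 Mf Lf Rs Rf x u k = Fx k L0 L2 Mf Lf Rs Rf u (x 0%nat) (x 1%nat) (x 2%nat) (x 3%nat) (x 4%nat).
Proof.
  intro Hk. assert (E: field L0 L2 Mf Lf Rs Rf x u k = mv 3 (inv 3 (Lmat L0 L2 Mf Lf (x 4%nat)))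
        (fun m => u m - mv 3 (Req L0 L2 Mf Lf Rs Rf (x 3%nat) (x 4%nat)) x m) k).
  { destruct k as [|[|[|k]]]; try reflexivity; lia. }
  rewrite E. unfold mv, inv. rewrite detL. unfold Fx, Kc, rsum. simpl.
  unfold Rdiv. ring.
Qed.
Lemma det5_block (O : mat) :
  O 0%nat 0%nat = 1 -> O 0%nat 1%nat = 0 -> O 0%nat 2%nat = 0 -> O 0%nat 3%nat = 0 -> O 0%nat 4%nat = 0 ->
  O 1%nat 0%nat = 0 -> O 1%nat 1%nat = 1 -> O 1%nat 2%nat = 0 -> O 1%nat 3%nat = 0 -> O 1%nat 4%nat = 0 ->
  O 2%nat 0%nat = 0 -> O 2%nat 1%nat = 0 -> O 2%nat 2%nat = 1 -> O 2%nat 3%nat = 0 -> O 2%nat 4%nat = 0 ->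
  det 5 O = O 3%nat 3%nat * O 4%nat 4%nat - O 3%nat 4%nat * O 4%nat 3%nat.
Proof.
  intros. unfold det, rsum, minor, skip. simpl.
  repeat match goal with H : O _ _ = _ |- _ => rewrite H; clear H end.
  ring.
Qed.
Lemma dcoord (x : vec) i j : derivable_pt_lim (fun t => upd x j t i) (x j) (if Nat.eqb i j then 1 else 0).
Proof. unfold upd. destruct (Nat.eqb i j); [apply derivable_pt_lim_id | apply derivable_pt_lim_const]. Qed.

Ltac cbvall := cbv [Fx rsum det minor skip Lmat Req Rmat dLmat fold_right map seq Nat.ltb Nat.leb Nat.add pow].

Theorem mainTheorem3 (L0 L2 Mf Lf Rs Rf : R) (x u : vec) (O : mat) :
  let Ld := L0 + L2 in
  let Lq := L0 - L2 in
  let LD := Ld - Lq in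
  let sd := 1 - Mf ^ 2 / (Ld * Lf) in
  let sDLD := LD - Mf ^ 2 / Lf in   (* sigma_Delta * L_Delta *)
  0 < Ld -> 0 < Lq -> 0 < Lf -> sd <> 0 ->
  (forall i j, (i < 5)%nat -> (j < 5)%nat ->
     partial_deriv (obs L0 L2 Mf Lf Rs Rf u i) x j (O i j)) ->
  det 5 O =
    / (sd * Ld * Lq) *
      ((LD * isd x + Mf * x 2%nat) ^ 2 + sDLD * LD * isq x ^ 2) * x 3%nat
  + sDLD / (sd * Ld * Lq) *
      ((LD * disd L0 L2 Mf Lf Rs Rf x u
          + Mf * field L0 L2 Mf Lf Rs Rf x u 2%nat) * isq x
       - (LD * isd x + Mf * x 2%nat) * disq L0 L2 Mf Lf Rs Rf x u).
Proof.
  intros Ld Lq LD sd sDLD HLd HLq HLf Hsd HO. unfold Ld in HLd. unfold Lq in HLq.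
  assert (Hc : forall i j, (i < 3)%nat -> (j < 5)%nat -> O i j = if Nat.eqb i j then 1 else 0).
  { intros i j Hi Hj. apply (uniqueness_limite (fun t => upd x j t i) (x j)).
    - pose proof (HO i j ltac:(lia) Hj) as H. unfold partial_deriv in H.
      destruct i as [|[|[|i]]]; try lia; exact H.
    - apply dcoord. }
  rewrite det5_block by (rewrite Hc by lia; reflexivity).
  evar (d33 : R). evar (d34 : R). evar (d43 : R). evar (d44 : R).
  assert (H34 : derivable_pt_lim (fun t => field L0 L2 Mf Lf Rs Rf (upd x 4 t) u 0%nat) (x 4%nat) d34).
  { replace (fun t => field L0 L2 Mf Lf Rs Rf (upd x 4 t) u 0%nat) with
      (fun t => Fx 0 L0 L2 Mf Lf Rs Rf u (x 0%nat) (x 1%nat) (x 2%nat) (x 3%nat) t).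
    2:{ apply functional_extensionality; intro t. rewrite fieldE by lia. unfold upd; simpl. reflexivity. }
    apply is_derive_Reals. cbvall. auto_derive. exact I. unfold d34. reflexivity. }
  assert (H44 : derivable_pt_lim (fun t => field L0 L2 Mf Lf Rs Rf (upd x 4 t) u 1%nat) (x 4%nat) d44).
  { replace (fun t => field L0 L2 Mf Lf Rs Rf (upd x 4 t) u 1%nat) with
      (fun t => Fx 1 L0 L2 Mf Lf Rs Rf u (x 0%nat) (x 1%nat) (x 2%nat) (x 3%nat) t).
    2:{ apply functional_extensionality; intro t. rewrite fieldE by lia. unfold upd; simpl. reflexivity. }
    apply is_derive_Reals. cbvall. auto_derive. exact I. unfold d44. reflexivity. }
  assert (H33 : derivable_pt_lim (fun t => field L0 L2 Mf Lf Rs Rf (upd x 3 t) u 0%nat) (x 3%nat) d33).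
  { replace (fun t => field L0 L2 Mf Lf Rs Rf (upd x 3 t) u 0%nat) with
      (fun t => Fx 0 L0 L2 Mf Lf Rs Rf u (x 0%nat) (x 1%nat) (x 2%nat) t (x 4%nat)).
    2:{ apply functional_extensionality; intro t. rewrite fieldE by lia. unfold upd; simpl. reflexivity. }
    apply is_derive_Reals. cbvall. auto_derive. exact I. unfold d33. reflexivity. }
  assert (H43 : derivable_pt_lim (fun t => field L0 L2 Mf Lf Rs Rf (upd x 3 t) u 1%nat) (x 3%nat) d43).
  { replace (fun t => field L0 L2 Mf Lf Rs Rf (upd x 3 t) u 1%nat) with
      (fun t => Fx 1 L0 L2 Mf Lf Rs Rf u (x 0%nat) (x 1%nat) (x 2%nat) t (x 4%nat)).
    2:{ apply functional_extensionality; intro t. rewrite fieldE by lia. unfold upd; simpl. reflexivity. }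
    apply is_derive_Reals. cbvall. auto_derive. exact I. unfold d43. reflexivity. }
  rewrite (uniqueness_limite _ _ _ _ (HO 3%nat 3%nat ltac:(lia) ltac:(lia)) H33).
  rewrite (uniqueness_limite _ _ _ _ (HO 3%nat 4%nat ltac:(lia) ltac:(lia)) H34).
  rewrite (uniqueness_limite _ _ _ _ (HO 4%nat 3%nat ltac:(lia) ltac:(lia)) H43).
  rewrite (uniqueness_limite _ _ _ _ (HO 4%nat 4%nat ltac:(lia) ltac:(lia)) H44).
  unfold d33, d34, d43, d44. clear H33 H34 H43 H44 d33 d34 d43 d44 Hc HO.
  unfold disd, disq, isd, isq. simpl (field _ _ _ _ _ _ x u 4%nat).
  rewrite !fieldE by lia. cbvall.
  assert (HLdLf : 0 < (L0+L2)*Lf) by (apply Rmult_lt_0_compat; unfold Ld in HLd; lra).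
  assert (Hd : (L0+L2)*Lf - Mf^2 <> 0).
  { intro H; apply Hsd; unfold sd, Ld. replace (Mf^2) with ((L0+L2)*Lf) by lra. field. split; lra. }
  assert (HKc : Kc L0 L2 Mf Lf = (L0-L2)*((L0+L2)*Lf - Mf^2)) by (unfold Kc; ring).
  assert (HKn : Kc L0 L2 Mf Lf <> 0).
  { rewrite HKc. apply Rmult_integral_contrapositive_currified; [unfold Lq in HLq; lra|exact Hd]. }
  assert (E1 : / (sd * Ld * Lq) = Lf * / Kc L0 L2 Mf Lf).
  { rewrite HKc. unfold sd, Ld, Lq. field. unfold Lq in HLq. repeat split; lra. }
  assert (E2 : sDLD / (sd * Ld * Lq) = (LD*Lf - Mf^2) * / Kc L0 L2 Mf Lf).
  { rewrite HKc. unfold sDLD, sd, Ld, Lq, LD. field. unfold Lq in HLq. repeat split; lra. }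
  rewrite E1, E2.
  rewrite cos_2a, sin_2a. pose proof (sin2_cos2 (x 4%nat)) as Hcs. unfold Rsqr in Hcs.
  set (c := cos (x 4%nat)) in *. set (s := sin (x 4%nat)) in *. clearbody c s.
  assert (Hs2 : s^2 = 1 - c^2) by (rewrite <- Hcs; ring).
  unfold sDLD, LD, Ld, Lq, Kc in *. assert (HLf0 : Lf <> 0) by lra. clear -Hs2 HKn HLf0.
  Time field_simplify_eq. Time ring [Hs2]. split; assumption. Qed.
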